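(* Let $(S,d)$ be a metric space and let $P$ be a non-empty subset of $S$ with the induced metric. If $f\in\mathrm{BL}(P)$ and $c\in\mathbb{R}$ are such that $|f\vee c\mathbf{1}|_L=|f|_L$, then $$\mathcal{E}^{S,0}_P(f\vee c\mathbf{1})\vee c\mathbf{1}=\mathcal{E}^{S,0}_P(f)\vee c\mathbf{1}.$$
   Context: $\mathrm{BL}(P)$ is the space of bounded real-valued Lipschitz functions on $P$, $|f|_L=\sup_{x\neq y}|f(x)-f(y)|/d(x,y)$ (with $|f|_L=0$ on a singleton), $\vee$ is pointwise maximum, and $c\mathbf{1}$ denotes the constant function $c$ (on $P$ or on $S$ as appropriate). For $f\in\mathrm{BL}(P)$, $\mathcal{E}^{S,0}_P f(x)=\sup_{p\in P}[f(p)-|f|_L d(p,x)]$ for $x\in S$. *)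

(* Defs.v *)
From HB Require Import structures.
From mathcomp Require Import all_boot all_order all_algebra.
From mathcomp Require Import boolp classical_sets reals.
Set Implicit Arguments. Unset Strict Implicit. Unset Printing Implicit Defensive.
Import Order.TTheory GRing.Theory Num.Theory.
Local Open Scope classical_set_scope.
Local Open Scope ring_scope.

Section Defs.
Variables (R : realType) (S : Type) (d : S -> S -> R).

Definition is_metric : Prop :=
  (forall x y, 0 <= d x y) /\
  (forall x y, d x y = 0 <-> x = y) /\
  (forall x y, d x y = d y x) /\
  (forall x y z, d x z <= d x y + d y z).

(* f (a function on S, of which only the restriction to P matters) is
   bounded and Lipschitz on P w.r.t. the induced metric: f|_P in BL(P). *)
Definition BL (P : set S) (f : S -> R) : Prop :=
  (exists M, forall x, P x -> `|f x| <= M) /\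
  (exists K, forall x y, P x -> P y -> `|f x - f y| <= K * d x y).

(* |f|_L = sup_{x <> y in P} |f x - f y| / d(x,y), and 0 if there is no
   pair of distinct points (P a singleton). *)
Definition lip_const (P : set S) (f : S -> R) : R :=
  let A := [set r : R | exists x y, [/\ P x, P y, x <> y &
                          r = `|f x - f y| / d x y]] in
  if pselect (A !=set0) is left _ then sup A else 0.

Definition ext0 (P : set S) (f : S -> R) (x : S) : R :=
  sup [set f p - lip_const P f * d p x | p in P].

End Defs.

(* Main.v *)
Require Import Defs.
From HB Require Import structures.
From mathcomp Require Import all_boot all_order all_algebra.
From mathcomp Require Import boolp classical_sets reals.
Import Order.TTheory GRing.Theory Num.Theory.
Local Open Scope classical_set_scope.
Local Open Scope ring_scope.

Lemma lip_const_ge0 (R : realType) (S : Type) (d : S -> S -> R) (P : set S) (f : S -> R) :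
  (forall x y, 0 <= d x y) -> 0 <= lip_const d P f.
Proof.
move=> d0; rewrite /lip_const; case: pselect => // -[r Ar].
set A := [set r : R | _] in Ar *.
have [hs|nhs] := pselect (has_sup A); last by rewrite sup_out.
apply: le_trans (sup_upper_bound hs Ar).
by case: Ar => [x [y [_ _ _ ->]]]; rewrite divr_ge0.
Qed.

Lemma subr_le_aux (R : realType) (a b e : R) : 0 <= e -> a <= b -> a - e <= b.
Proof. by move=> e0 ab; rewrite lerBlDr (le_trans ab) // lerDl. Qed.

Theorem corollary4p5 (R : realType) (S : Type) (d : S -> S -> R)
  (P : set S) (f : S -> R) (c : R) :
  is_metric d -> P !=set0 -> BL d P f ->
  lip_const d P (fun p => Num.max (f p) c) = lip_const d P f ->
  forall x : S,
    Num.max (ext0 d P (fun p => Num.max (f p) c) x) c =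
    Num.max (ext0 d P f x) c.
Proof.
move=> [d0 _] [p0 Pp0] [[M HM] _] HL x.
rewrite /ext0 HL.
have L0 := @lip_const_ge0 R S d P f d0.
set L := lip_const d P f.
set Af := [set f p - L * d p x | p in P].
set Ag := [set Num.max (f p) c - L * d p x | p in P].
have Ldge0 p : 0 <= L * d p x by rewrite mulr_ge0.
have Afn : Af !=set0 by exists (f p0 - L * d p0 x), p0.
have Agn : Ag !=set0 by exists (Num.max (f p0) c - L * d p0 x), p0.
have Agub : has_ubound Ag.
  exists (Num.max M c) => _ [p Pp <-].
  apply: subr_le_aux => //.
  rewrite ge_max !le_max lexx orbT andbT.
  by rewrite (le_trans (ler_norm _) (HM p Pp)).
have h1 : sup Ag <= Num.max (sup Af) c.
  apply: ge_sup => // _ [p Pp <-].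
  have hf : f p - L * d p x <= sup Af.
    apply: ub_le_sup; last by exists p.
    exists M => _ [q Pq <-]; apply: subr_le_aux => //.
    by rewrite (le_trans (ler_norm _) (HM q Pq)).
  rewrite lerBlDr ge_max; apply/andP; split.
    rewrite -lerBlDr (le_trans hf) //; by rewrite le_max lexx.
  rewrite -lerBlDr; apply: subr_le_aux => //; by rewrite le_max lexx orbT.
have h2 : sup Af <= sup Ag.
  apply: ge_sup => // _ [p Pp <-].
  apply: le_trans (ub_le_sup Agub _); last by exists p.
  by rewrite lerD2r le_max lexx.
apply/le_anti/andP; split; rewrite ge_max !le_max lexx ?orbT andbT.
  by rewrite -le_max.
by rewrite (le_trans h2) ?lexx.
Qed.
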